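(* Let $s\ge1$ and let $a_{ij}$ ($i,j=1,\dots,s$) be scalars satisfying \[ a_{ij}a_{ik} - a_{ij}a_{jk} - a_{ik}a_{kj} = 0\qquad\text{for all } i,j,k\in\{1,\dots,s\}\text{ with } j\neq k. \] Then: (a) for all $i\neq j$, if $a_{ij}\neq0$ then $a_{ji}=0$; (b) for all $i,j,k$, if $a_{ik}\neq0$ and $a_{kj}\neq0$, then $a_{ij}\neq0$. *)

(* Defs.v *)
From mathcomp Require Import all_boot all_algebra.
Set Implicit Arguments. Unset Strict Implicit. Unset Printing Implicit Defensive.

(* Main.v *)
Require Import Defs.
From mathcomp Require Import all_boot all_algebra.
Import GRing.Theory.
Local Open Scope ring_scope.

Theorem lemma2p4 (F : fieldType) (s : nat) (hs : (1 <= s)%N)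
  (a : 'I_s -> 'I_s -> F)
  (h : forall i j k : 'I_s, j != k ->
         a i j * a i k - a i j * a j k - a i k * a k j = 0) :
  (forall i j : 'I_s, i != j -> a i j != 0 -> a j i = 0) /\
  (forall i j k : 'I_s, a i k != 0 -> a k j != 0 -> a i j != 0).
Proof.
split.
- move=> i j ij aij.
  have := h i j i ltac:(by rewrite eq_sym).
  rewrite [a i i * a i j]mulrC addrAC subrr add0r => /eqP.
  by rewrite oppr_eq0 mulf_eq0 (negbTE aij) /= => /eqP.
- move=> i j k aik akj.
  case: (eqVneq j k) => [-> //|jk].
  apply/negP=> /eqP aij.
  have := h i j k jk.
  rewrite aij !mul0r subrr add0r => /eqP.
  by rewrite oppr_eq0 mulf_eq0 (negbTE aik) (negbTE akj).
Qed.
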